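(* Let $\mathbb F$ be an algebraically closed field, $m\ge1$, and $L:\mathbb F\to\mathbb F^{m+1}$, $x\mapsto(x,x^3,x^9,\dots,x^{3^m})$, so $L_i(z)=z^{3^i}$ for $0\le i\le m$. Then for any $e_1,\dots,e_{m-1}\in\mathbb Q_{\ge0}$ there is some $i\in\{0,\dots,m\}$ with $z^{3^i}\notin 2\text{-}\mathrm{span}(z^{e_1},\dots,z^{e_{m-1}})$.
   Context: $z$ is an indeterminate, and for $e\in\mathbb Q_{\ge0}$, $z^e$ denotes an element of $\overline{\mathbb F(z)}$ from a fixed compatible system of fractional powers (so $z^1=z$, $z^0=1$, $z^ez^{e'}=z^{e+e'}$). For $p_1,\dots,p_r\in\overline{\mathbb F(z)}$, $2\text{-}\mathrm{span}(p_1,\dots,p_r)$ is the $\mathbb F$-linear span of all products $p_1^{a_1}\cdots p_r^{a_r}$ with $a_i\in\mathbb N$, $\sum_ia_i\le 2$. *)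

(* Defs.v *)
From HB Require Import structures.
From mathcomp Require Import all_boot all_order all_algebra.
Set Implicit Arguments. Unset Strict Implicit. Unset Printing Implicit Defensive.
Import Order.TTheory GRing.Theory Num.Theory.
Local Open Scope ring_scope.

(* 2-span(p_1,...,p_r): the F-linear span (F embedded in K via iota) of all
   products p_1^{a_1} ... p_r^{a_r} with a_i in N and sum a_i <= 2.
   (Each a_i <= 2, so exponent vectors range over {ffun 'I_r -> 'I_3}.) *)
Definition two_span (F K : fieldType) (iota : {rmorphism F -> K})
    (r : nat) (p : 'I_r -> K) (x : K) : Prop :=
  exists c : {ffun 'I_r -> 'I_3} -> F,
    x = \sum_(a : {ffun 'I_r -> 'I_3} | (\sum_(i < r) (a i : nat) <= 2)%N)
          iota (c a) * \prod_(i < r) p i ^+ a i.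

Definition transcendental_over (F K : fieldType) (iota : {rmorphism F -> K})
    (z : K) : Prop :=
  forall q : {poly F}, (map_poly iota q).[z] = 0 -> q = 0.

(* pw e = z^e for e in Q_{>=0}: a compatible system of fractional powers. *)
Definition frac_powers (K : fieldType) (z : K) (pw : rat -> K) : Prop :=
  [/\ pw 1 = z, pw 0 = 1 &
      forall e e' : rat, 0 <= e -> 0 <= e' -> pw (e + e') = pw e * pw e'].

(* Main.v *)
Require Import Defs.
From HB Require Import structures.
From mathcomp Require Import all_boot all_order all_algebra.
From Stdlib Require Import Classical.
Import Order.TTheory GRing.Theory Num.Theory.
Local Open Scope ring_scope.

Lemma trans_root (F K : closedFieldType) (iota : {rmorphism F -> K}) (z w : K) (N : nat) :
  transcendental_over iota z -> w ^+ N = z -> transcendental_over iota w.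
Proof.
move=> hz hw q hq; have [//|qn0] := eqVneq q 0.
have [r hr] := closed_field_poly_normal q.
move: hq; rewrite hr map_polyZ rmorph_prod hornerZ horner_prod.
move/eqP; rewrite mulf_eq0 fmorph_eq0 lead_coef_eq0 (negbTE qn0) /=.
rewrite prodf_seq_eq0 => /hasP [x _ /=].
rewrite rmorphB /= map_polyX map_polyC hornerXsubC subr_eq0 => /eqP wx.
have := hz ('X - (x ^+ N)%:P).
rewrite rmorphB /= map_polyX map_polyC hornerXsubC /=.
rewrite rmorphXn /= -wx hw subrr => /(_ erefl) /eqP.
by rewrite polyXsubC_eq0.
Qed.

Lemma pw_nat (K : fieldType) (z : K) (pw : rat -> K) (N k : nat) :
  frac_powers z pw -> pw (k%:R / N%:R) = pw (N%:R^-1) ^+ k.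
Proof.
case=> _ h0 hD; elim: k => [|k IH]; first by rewrite mul0r h0 expr0.
rewrite -addn1 natrD mulrDl hD ?IH ?mul1r ?expr1 ?exprD //.
  by apply: divr_ge0; apply: ler0n.
by rewrite invr_ge0 ler0n.
Qed.

Lemma exN n (e : 'I_n -> rat) : (forall j, 0 <= e j) ->
  exists N : nat, (0 < N)%N /\ forall j, exists k : nat, e j = k%:R / N%:R.
Proof.
move=> he; exists (\prod_j `|denq (e j)|%N)%N; split.
  by rewrite prodn_gt0 // => j; rewrite absz_gt0 denq_neq0.
move=> j; rewrite (bigD1 j) //=.
set M := (\prod_(i | i != j) _)%N.
have M0 : (0 < M)%N by rewrite prodn_gt0 // => i; rewrite absz_gt0 denq_neq0.
exists (`|numq (e j)| * M)%N.
rewrite !natrM invfM mulrACA divff ?pnatr_eq0 -?lt0n // mulr1.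
have h1 : (`|numq (e j)|%N)%:R = (numq (e j))%:~R :> rat.
  by rewrite -[in RHS](@gez0_abs (numq (e j))) ?numq_ge0.
have h2 : (`|denq (e j)|%N)%:R = (denq (e j))%:~R :> rat.
  by rewrite -[in RHS](@gez0_abs (denq (e j))) // ltW // denq_gt0.
by rewrite h1 h2 divq_num_den.
Qed.

Lemma pow3 a b : (3 ^ a <= 2 * 3 ^ b)%N -> (a <= b)%N.
Proof.
move=> H; rewrite -ltnS -(ltn_exp2l _ _ (isT : (1 < 3)%N)).
apply: leq_ltn_trans H _; rewrite expnS ltn_mul2r expn_gt0 //.
Qed.

Lemma endpoint n (a : {ffun 'I_n -> 'I_3}) (k : 'I_n -> nat) (S : nat) :
  (\sum_(i < n) (a i : nat) <= 2)%N -> (\sum_j k j * a j)%N = S -> (0 < S)%N ->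
  exists j, (S <= 2 * k j)%N && (k j <= S)%N.
Proof.
move=> ha hS S0.
case: (boolP [exists j, (0 < a j)%N && (S <= 2 * k j)%N]).
  move=> /existsP [j /andP [aj Sj]]; exists j; rewrite Sj /= -hS.
  rewrite (bigD1 j) //=; apply: leq_trans (leq_addr _ _).
  by rewrite leq_pmulr.
move=> /existsPn hn; exfalso.
have : (2 * S <= (\sum_(i < n) (a i : nat)) * S.-1)%N.
  rewrite -{1}hS big_distrr big_distrl /=; apply: leq_sum => j _.
  have := hn j; rewrite negb_and -leqNgt -ltnNge.
  case/orP=> [|h]; first by rewrite leqn0 => /eqP ->; rewrite !muln0 mul0n.
  rewrite mulnA [X in (_ <= X)%N]mulnC leq_mul2r; apply/orP; right.
  by rewrite -ltnS prednK.
move=> h; have := leq_trans h (leq_mul ha (leqnn S.-1)).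
by rewrite leq_mul2l /= -ltnS prednK // ltnn.
Qed.

Theorem proposition9p7 (F : closedFieldType) (K : closedFieldType)
    (iota : {rmorphism F -> K}) (z : K) (pw : rat -> K)
    (hz : transcendental_over iota z) (hpw : frac_powers z pw)
    (m : nat) (hm : (1 <= m)%N)
    (e : 'I_m.-1 -> rat) (he : forall j, 0 <= e j) :
  exists i : 'I_m.+1,
    ~ two_span iota (fun j : 'I_m.-1 => pw (e j)) (z ^+ (3 ^ i)%N).
Proof.
apply: NNPP => hall.
have hi : forall i : 'I_m.+1,
    two_span iota (fun j : 'I_m.-1 => pw (e j)) (z ^+ (3 ^ i)%N).
  by move=> i; apply: NNPP => h; apply: hall; exists i.
have [N [N0 hk0]] := @exN _ e he.
have [k hk] := fin_all_exists hk0.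
set w := pw (N%:R^-1).
have pwk : forall j, pw (e j) = w ^+ k j by move=> j; rewrite hk (@pw_nat _ _ _ _ _ hpw).
have zw : z = w ^+ N.
  by rewrite -(@pw_nat _ _ _ _ _ hpw) divff ?pnatr_eq0 -?lt0n //; case: hpw.
have tw := @trans_root _ _ iota z w N hz (esym zw).
have key : forall i : 'I_m.+1, exists a : {ffun 'I_m.-1 -> 'I_3},
    (\sum_(j < m.-1) (a j : nat) <= 2)%N /\ (\sum_j k j * a j)%N = (N * 3 ^ i)%N.
  move=> i; have [c hc] := hi i.
  apply: NNPP => hne.
  pose M := (N * 3 ^ i)%N.
  pose P := fun a : {ffun 'I_m.-1 -> 'I_3} => (\sum_(j < m.-1) (a j : nat) <= 2)%N.
  pose n := fun a : {ffun 'I_m.-1 -> 'I_3} => (\sum_j k j * a j)%N.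
  have hn : forall a, P a -> (n a == M) = false.
    move=> a Pa; apply/negP => /eqP na; apply: hne; exists a; split=> //.
  pose q := 'X^M - \sum_(a | P a) (c a)%:P * 'X^(n a).
  have q0 : q = 0.
    apply: tw.
    rewrite /q rmorphB /= rmorph_sum /= hornerD hornerN horner_sum map_polyXn hornerXn.
    apply/eqP; rewrite subr_eq0; apply/eqP.
    rewrite /M exprM -zw hc; apply: eq_bigr => a _.
    rewrite rmorphM /= map_polyC map_polyXn hornerCM hornerXn; congr (_ * _).
    rewrite /n -prodrXr; apply: eq_bigr => j _.
    by rewrite pwk exprM.
  have := congr1 (fun p : {poly F} => p`_M) q0.
  rewrite /q coefB coefXn eqxx coef_sum coef0 big1 ?subr0 ?oner_eq0 //.
    by move=> /eqP; rewrite oner_eq0.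
  by move=> a Pa; rewrite coefCM coefXn eq_sym hn // mulr0.
have key2 : forall i : 'I_m.+1, exists j : 'I_m.-1,
    ((N * 3 ^ i) <= 2 * k j)%N && (k j <= N * 3 ^ i)%N.
  move=> i; have [a [ha hs]] := key i.
  apply: endpoint ha hs _; by rewrite muln_gt0 N0 expn_gt0.
have [g hg] := fin_all_exists key2.
have ginj : injective g.
  move=> i1 i2 h12; apply: val_inj; apply/eqP; rewrite eqn_leq.
  have := hg i1; have := hg i2; rewrite h12.
  move=> /andP [a1 b1] /andP [a2 b2].
  apply/andP; split; apply: pow3; rewrite -(leq_pmul2l N0) mulnCA.
    by apply: leq_trans a2 _; rewrite leq_mul2l b1 orbT.
  by apply: leq_trans a1 _; rewrite leq_mul2l b2 orbT.
have := @leq_card _ _ g ginj; rewrite !card_ord => H.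
have : (m.-1 < m.+1)%N by apply: leq_ltn_trans (leq_pred m) _.
by rewrite ltnNge H.
Qed.
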